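(* For each $n\geq 1$: (i) up to isomorphism there are exactly two anti-regular graphs with loops on $n$ vertices, denoted $G_n$ and $H_n$; (ii) $G_n$ and $H_n$ are complements of each other (as graphs with loops), one of them is connected and the other is disconnected; (iii) if $G_n$ denotes the connected one, then $d(G_n)=(1,2,\ldots,n)$ and $d(H_n)=(0,1,\ldots,n-1)$; (iv) both $G_n$ and $H_n$ are threshold graphs with loops whose binary creation sequences are alternating (consecutive bits differ); (v) the binary sequence of $G_n$ begins with $n \bmod 2$; (vi) the binary sequence of $H_n$ begins with $(n+1)\bmod 2$ and is obtained from the binary sequence of $G_n$ by flipping every bit.
   Context: A graph with loops is a pair $G=(V,E)$ with $V$ finite and $E$ a set of 2-element multisets $\{u,v\}$ of $V$ ($u=v$ allowed, giving a loop; at most one loop per vertex, no multiple edges). The degree of a vertex is the number of edges containing it, a loop counted once; $d(G)$ denotes the degree sequence in non-decreasing order. $G$ is an anti-regular graph with loops if all its vertex degrees are distinct. The complement of a graph with loops $G=(V,E)$ is the graph with loops on $V$ whose edge set consists of exactly those multisets $\{u,v\}$ (including $u=v$) not in $E$. Threshold graph with loops from a binary sequence $b=(b_1,\ldots,b_n)\in\{0,1\}^n$: start with a vertex $v_1$, with a loop iff $b_1=1$; for $k=1,\ldots,n-1$, add vertex $v_{k+1}$ and, iff $b_{k+1}=1$, join $v_{k+1}$ to all of $v_1,\ldots,v_{k+1}$ (including a loop at $v_{k+1}$); if $b_{k+1}=0$, $v_{k+1}$ is added with no edges. A graph with loops is a threshold graph with loops iff it is isomorphic to one obtained this way, and $b$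 is then its binary sequence. *)

(* Defs.v *)
(* A graph with loops on 'I_n is a symmetric e : rel 'I_n; e x x = loop at x. *)
From mathcomp Require Import all_boot.
Set Implicit Arguments. Unset Strict Implicit. Unset Printing Implicit Defensive.


(* degree: number of edges containing x, loop counted once
   = number of y (possibly y = x) with e x y *)
Definition ldeg (n : nat) (e : rel 'I_n) (x : 'I_n) : nat := #|[pred y | e x y]|.

Definition degseq (n : nat) (e : rel 'I_n) : seq nat :=
  sort leq [seq ldeg e x | x <- enum 'I_n].

Definition antiregular (n : nat) (e : rel 'I_n) : Prop := injective (ldeg e).

Definition lcompl (n : nat) (e : rel 'I_n) : rel 'I_n := fun x y => ~~ e x y.

Definition liso (n : nat) (e1 e2 : rel 'I_n) : Prop :=
  exists f : 'I_n -> 'I_n, bijective f /\ forall x y, e1 x y = e2 (f x) (f y).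

Definition lconnected (n : nat) (e : rel 'I_n) : Prop :=
  forall x y : 'I_n, connect e x y.

(* Threshold graph with loops from b = (b_1,...,b_n), 0-indexed here:
   vertex i (i.e. v_{i+1}); for i <= j, {v_i, v_j} is an edge iff b_j = 1. *)
Definition thr (n : nat) (b : n.-tuple bool) : rel 'I_n :=
  fun x y => tnth b (if x <= y then y else x).

Definition alternating (b : seq bool) : Prop :=
  forall i, i.+1 < size b -> nth false b i != nth false b i.+1.

(* Main.v *)
Require Import Defs.
From mathcomp Require Import all_boot.
From mathcomp Require Import zify.
Set Implicit Arguments. Unset Strict Implicit. Unset Printing Implicit Defensive.

Lemma card_range (T : finType) (d : T -> nat) (A : {pred T}) a k :
  injective d -> (forall y, y \in A -> a <= d y < a + k) -> #|A| <= k.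
Proof.
move=> dI hA; rewrite cardE -(size_map d) -(size_iota a k).
apply: uniq_leq_size; first by rewrite (map_inj_uniq dI) enum_uniq.
by move=> m /mapP [y]; rewrite mem_enum => yA ->; rewrite mem_iota; apply: hA.
Qed.

Lemma card_split (T : finType) (d : T -> nat) (A : {pred T}) a k l :
  injective d -> #|T| = k + l ->
  (forall y, y \in A -> a <= d y < a + k) ->
  (forall y, y \notin A -> a + k <= d y < a + k + l) -> #|A| = k.
Proof.
move=> dI hT h1 h2.
have c1 := card_range dI h1.
have c2 : #|[predC A]| <= l.
  apply: (card_range (a := a + k) dI) => y; rewrite inE; exact: h2.
have := cardC A; lia.
Qed.

Lemma card_split' (T : finType) (d : T -> nat) (A : {pred T}) a k l :
  injective d -> #|T| = k + l ->
  (forall y, y \in A -> a + l <= d y < a + l + k) ->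
  (forall y, y \notin A -> a <= d y < a + l) -> #|A| = k.
Proof.
move=> dI hT h1 h2.
have c1 := card_range dI h1.
have c2 : #|[predC A]| <= l.
  apply: (card_range (a := a) dI) => y; rewrite inE; exact: h2.
have := cardC A; lia.
Qed.

Lemma ldeg_le n (E : rel 'I_n) x : ldeg E x <= n.
Proof. by rewrite /ldeg; apply: leq_trans (max_card _) _; rewrite card_ord. Qed.

Lemma ldeg_compl n (E : rel 'I_n) x : ldeg (lcompl E) x = n - ldeg E x.
Proof.
rewrite /ldeg; have := cardC [pred y | E x y]; rewrite card_ord => h.
rewrite -[X in _ = X - _]h addKn; by apply: eq_card => y; rewrite !inE /lcompl.
Qed.

Section Key.
Variables (n : nat) (E : rel 'I_n).
Hypotheses (Es : symmetric E) (dI : injective (ldeg E))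
  (dR : forall x, 1 <= ldeg E x).
Local Notation d := (ldeg E).

Lemma dle x : d x <= n. Proof. exact: ldeg_le. Qed.

Lemma card_gt j : j <= n -> #|[pred y | j < d y]| = n - j.
Proof.
move=> jn; apply: (card_split' (d := d) (a := 1) (l := j)) => //.
- by rewrite card_ord; lia.
- move=> y; rewrite inE => h; have := dle y; lia.
- move=> y; rewrite inE -leqNgt => h; have := dR y; lia.
Qed.

Definition mu x := minn (2 * (n - d x)) (2 * d x - 1).

Lemma key_step x : (forall z, mu z < mu x -> forall y, E z y = (n < d z + d y)) ->
  forall y, E x y = (n < d x + d y).
Proof.
move=> IH y.
have hx1 := dR x; have hxn := dle x.
have cF : #|[pred y | n < d x + d y]| = d x.
  rewrite -[RHS](subKn hxn) -card_gt ?leq_subr //.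
  by apply: eq_card => z; rewrite !inE; lia.
case: (leqP (n - d x) (d x - 1)) => hc.
- have sub : [pred y | E x y] \subset [pred y | n < d x + d y].
    apply/subsetP => z; rewrite !inE => exz; rewrite ltnNge; apply/negP => hz.
    have hz1 := dR z.
    have hmu : mu z < mu x by rewrite /mu; lia.
    have := IH z hmu x; rewrite Es exz => /esym h.
    move: h; rewrite addnC; lia.
  have ceq : #|[pred y | E x y]| = #|[pred y | n < d x + d y]| by rewrite cF.
  move: sub => /(subset_cardP ceq) h.
  by have := h y; rewrite !inE.
- have sub : [pred y | n < d x + d y] \subset [pred y | E x y].
    apply/subsetP => z; rewrite !inE => hz.
    have hz1 := dR z; have hzn := dle z.
    have hmu : mu z < mu x by rewrite /mu; lia.
    by rewrite Es (IH z hmu x) addnC.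
  have ceq : #|[pred y | n < d x + d y]| = #|[pred y | E x y]| by rewrite cF.
  move: sub => /(subset_cardP ceq) h.
  by have := h y; rewrite !inE.
Qed.

Lemma key_aux m : forall x, mu x <= m -> forall y, E x y = (n < d x + d y).
Proof.
elim: m => [|m IHm] x hx; apply: key_step => z hz.
  by move: hz; rewrite ltnNge (leq_trans hx).
by apply: IHm; lia.
Qed.

Lemma key x y : E x y = (n < d x + d y).
Proof. exact: (@key_aux (mu x)). Qed.
End Key.

Definition fv n (x : nat) := if n <= 2*x+1 then 2*x+1-n else n-2-2*x.

Lemma fv_lt n x : x < n -> fv n x < n.
Proof. rewrite /fv; case: ifP => h; lia. Qed.

Lemma fv_inj n x y : x < n -> y < n -> fv n x = fv n y -> x = y.
Proof. rewrite /fv; case: ifP => h1; case: ifP => h2; lia. Qed.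

Lemma fv_odd n x : x < n -> odd (n - fv n x) = (n <= 2*x+1).
Proof.
rewrite /fv; case: ifP => h xn.
  have -> : n - (2*x+1-n) = (2*(n-x-1)).+1 by lia.
  by rewrite /= oddM.
have -> : n - (n-2-2*x) = 2*(x.+1) by lia.
by rewrite oddM.
Qed.

Lemma fv_edge n x y : x < n -> y < n ->
  (n <= x+y+1) = (n <= 2 * (if fv n x <= fv n y then y else x) + 1).
Proof.
move=> xn yn; rewrite /fv.
case: (leqP n (2*x+1)) => h1; case: (leqP n (2*y+1)) => h2 /=;
  case: ifP => h3; apply/idP/idP; lia.
Qed.

Definition Gr n : rel 'I_n := fun x y => (n <= nat_of_ord x + nat_of_ord y + 1)%N.
Arguments Gr : clear implicits.

Lemma deg_Gr n (x : 'I_n) : ldeg (Gr n) x = x.+1.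
Proof.
have xn := ltn_ord x.
apply: (@card_split' _ (@nat_of_ord n) _ 0 x.+1 (n - x.+1)) => //.
- exact: val_inj.
- by rewrite card_ord; lia.
- move=> y; rewrite inE /Gr => h; have := ltn_ord y; lia.
- move=> y; rewrite inE /Gr -ltnNge => h; lia.
Qed.

Lemma symG n : symmetric (Gr n).
Proof. by move=> x y; rewrite /Gr (addnC x). Qed.

Lemma liso_deg n (E1 E2 : rel 'I_n) f : bijective f ->
  (forall x y, E1 x y = E2 (f x) (f y)) -> forall x, ldeg E1 x = ldeg E2 (f x).
Proof.
move=> fb fe x; rewrite /ldeg.
have -> : #|[pred y | E1 x y]| = #|f @^-1: [set z | E2 (f x) z]|.
  by apply: eq_card => y; rewrite !inE fe.
rewrite card_preimset; last exact: bij_inj.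
by apply: eq_card => y; rewrite !inE.
Qed.

Lemma liso_antireg n (E1 E2 : rel 'I_n) : liso E1 E2 -> antiregular E1 -> antiregular E2.
Proof.
move=> [f [fb fe]] ar u v.
have [g fg gf] := fb.
rewrite -(gf u) -(gf v) -!(liso_deg fb fe) => /ar ->. done.
Qed.

Lemma iso_to_G n (E : rel 'I_n) : symmetric E -> antiregular E ->
  (forall x, 1 <= ldeg E x) -> liso E (Gr n).
Proof.
move=> Es ar dR.
have h : forall x, (ldeg E x).-1 < n.
  move=> x; have := ldeg_le E x; have := dR x; lia.
exists (fun x => Ordinal (h x)); split.
  apply: injF_bij => a b /(congr1 val) /= hab; apply: ar.
  have := dR a; have := dR b; lia.
move=> x y; rewrite (key Es ar dR) /Gr /=.
have := dR x; have := dR y => h1 h2; apply/idP/idP; lia.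
Qed.

Lemma degseq_iota n (E : rel 'I_n) a : injective (ldeg E) ->
  (forall x, a <= ldeg E x < a + n) -> degseq E = iota a n.
Proof.
move=> dI hr; rewrite /degseq.
have pe : perm_eq [seq ldeg E x | x <- enum 'I_n] (iota a n).
  have u1 : uniq [seq ldeg E x | x <- enum 'I_n] by rewrite (map_inj_uniq dI) enum_uniq.
  have sub : {subset [seq ldeg E x | x <- enum 'I_n] <= iota a n}.
    by move=> m /mapP [y _ ->]; rewrite mem_iota; apply: hr.
  have hs : size (iota a n) <= size [seq ldeg E x | x <- enum 'I_n].
    by rewrite size_map size_enum_ord size_iota.
  have [_ hi] := uniq_min_size u1 sub hs.
  by apply: uniq_perm => //; apply: iota_uniq.
rewrite -(sorted_sort leq_trans (iota_sorted a n)).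
apply/perm_sortP => //; [exact: leq_total | exact: leq_trans | exact: anti_leq].
Qed.

Lemma thr_alt n (b : n.-tuple bool) : antiregular (thr b) -> alternating b.
Proof.
move=> ar i; rewrite size_tuple => hi; apply/negP => /eqP heq.
pose i0 : 'I_n := Ordinal (ltnW hi); pose i1 : 'I_n := Ordinal hi.
have : ldeg (thr b) i0 = ldeg (thr b) i1.
  apply: eq_card => y; rewrite !inE /thr !(tnth_nth false) /=.
  case: (leqP i0 y) => h2; case: (leqP i1 y) => h3 //=.
  - by rewrite /= in h2 h3; have -> : nat_of_ord y = i by lia.
  - rewrite /= in h2 h3; lia.
by move/ar => /(congr1 val) /=; lia.
Qed.

Lemma thr_last n (b : n.-tuple bool) (i : 'I_n) : nat_of_ord i = n.-1 ->
  ldeg (thr b) i = if tnth b i then n else 0.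
Proof.
move=> hi.
have e : forall y, thr b i y = tnth b i.
  move=> y; rewrite /thr; case: ifP => // h.
  have -> // : y = i by apply: ord_inj; have := ltn_ord y; lia.
rewrite /ldeg; case hb: (tnth b i).
  by rewrite -[RHS](card_ord n); apply: eq_card => y; rewrite !inE e hb.
by apply: eq_card0 => y; rewrite !inE e hb.
Qed.

Lemma alt_nth (s : seq bool) : alternating s -> forall k, k < size s ->
  nth false s (size s - 1 - k) = odd k (+) nth false s (size s - 1).
Proof.
move=> alt; elim=> [|k IH] hk; first by rewrite subn0.
have hh : (size s - 1 - k.+1).+1 < size s by lia.
have := alt _ hh.
have -> : (size s - 1 - k.+1).+1 = size s - 1 - k by lia.
rewrite IH; last lia.
rewrite /=; case: (nth false s (size s - 1 - k.+1)); case: (odd k);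
  by case: (nth false s (size s - 1)).
Qed.

Lemma deg_H n (x : 'I_n) : ldeg (lcompl (Gr n)) x = n - x.+1.
Proof. by rewrite ldeg_compl deg_Gr. Qed.

Lemma no_full n (E : rel 'I_n) (x0 z : 'I_n) : symmetric E ->
  ldeg E x0 = 0 -> ldeg E z < n.
Proof.
move=> Es h0.
have nE : forall y, E x0 y = false.
  move=> y; apply/negP => hy.
  have := card0_eq h0 y; by rewrite !inE hy.
have c1 := cardC1 x0; rewrite card_ord in c1.
have : #|[pred y | E z y]| <= #|predC1 x0|.
  apply: subset_leq_card; apply/subsetP => y; rewrite !inE => hy.
  by apply/eqP => e; move: hy; rewrite e Es nE.
rewrite /ldeg c1; have := ltn_ord x0; lia.
Qed.

Lemma ltn_card n (E : rel 'I_n) (x0 : 'I_n) : ldeg E x0 = 0 -> 0 < n.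
Proof. by move=> _; case: x0 => m /=; lia. Qed.

Lemma classify n (E : rel 'I_n) : symmetric E -> antiregular E ->
  liso E (Gr n) \/ liso E (lcompl (Gr n)).
Proof.
move=> Es ar.
case: (boolP [exists x, ldeg E x == 0]) => [/existsP [x0 /eqP h0] | /existsPn hn].
  right.
  have Cs : symmetric (lcompl E) by move=> x y; rewrite /lcompl Es.
  have Car : antiregular (lcompl E).
    move=> a b; rewrite !ldeg_compl => h; apply: ar.
    have := ldeg_le E a; have := ldeg_le E b; lia.
  have CR : forall x, 1 <= ldeg (lcompl E) x.
    move=> x; rewrite ldeg_compl; have := no_full x Es h0; lia.
  have [f [fb fe]] := iso_to_G Cs Car CR.
  exists f; split => // x y; move: (fe x y); rewrite /lcompl => <-.
  by rewrite negbK.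
left; apply: iso_to_G => // x; have := hn x; rewrite lt0n; exact.
Qed.

Theorem mainTheorem2 (n : nat) (hn : 1 <= n) :
  exists G H : rel 'I_n,
    [/\ (* (i) exactly two anti-regular graphs with loops up to isomorphism *)
        [/\ symmetric G, symmetric H, antiregular G, antiregular H
          & ~ liso G H],
        (forall E : rel 'I_n, symmetric E -> antiregular E -> liso E G \/ liso E H),
        (* (ii) complements; G connected, H disconnected *)
        [/\ H = lcompl G, lconnected G & (1 < n -> ~ lconnected H)],
        (* (iii) degree sequences *)
        degseq G = iota 1 n /\ degseq H = iota 0 n
      & (* (iv)-(vi) threshold with loops; binary sequences *)
        [/\ (exists bG : n.-tuple bool, liso G (thr bG)),
            (exists bH : n.-tuple bool, liso H (thr bH)),
            (forall bG : n.-tuple bool, liso G (thr bG) ->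
               alternating bG /\ head false bG = odd n),
            (forall bH : n.-tuple bool, liso H (thr bH) ->
               alternating bH /\ head false bH = odd n.+1)
          & (forall bG bH : n.-tuple bool, liso G (thr bG) -> liso H (thr bH) ->
               bH = map_tuple negb bG)]].
Proof.
pose G := Gr n; pose H := lcompl G.
have lastP : n.-1 < n by lia.
pose lst : 'I_n := Ordinal lastP.
have symH : symmetric H by move=> x y; rewrite /H /lcompl /G symG.
have arG : antiregular G by move=> x y; rewrite /G !deg_Gr => -[] /ord_inj.
have arH : antiregular H.
  move=> x y; rewrite /H !deg_H => h; apply: ord_inj.
  have := ltn_ord x; have := ltn_ord y; lia.
have lastG : forall b : n.-tuple bool, liso G (thr b) -> tnth b lst = true.
  move=> b [f [fb fe]]; have [g fg gf] := fb.
  have := liso_deg fb fe (g lst); rewrite gf (thr_last b (i := lst)) // deg_Gr.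
  by case: (tnth b lst).
have lastH : forall b : n.-tuple bool, liso H (thr b) -> tnth b lst = false.
  move=> b [f [fb fe]]; have [g fg gf] := fb.
  have := liso_deg fb fe (g lst); rewrite gf (thr_last b (i := lst)) // deg_H.
  case: (tnth b lst) => //; have := ltn_ord (g lst); lia.
have formula : forall b : n.-tuple bool, alternating b -> forall i, i < n ->
    nth false b i = odd (n - 1 - i) (+) tnth b lst.
  move=> b alt i hi.
  have := alt_nth alt (k := n - 1 - i); rewrite size_tuple.
  have -> : n - 1 - (n - 1 - i) = i by lia.
  by move=> -> //; [rewrite (tnth_nth false) /= subn1 | lia].
have altG : forall b : n.-tuple bool, liso G (thr b) -> alternating b.
  by move=> b hb; apply: thr_alt; apply: liso_antireg hb arG.
have altH : forall b : n.-tuple bool, liso H (thr b) -> alternating b.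
  by move=> b hb; apply: thr_alt; apply: liso_antireg hb arH.
have fP : forall x : 'I_n, fv n x < n by move=> x; apply: fv_lt.
pose f (x : 'I_n) : 'I_n := Ordinal (fP x).
have fb : bijective f.
  apply: injF_bij => x y /(congr1 val) /= h; apply: ord_inj.
  exact: (fv_inj (ltn_ord x) (ltn_ord y)).
pose bG := [tuple odd (n - i) | i < n].
pose bH := [tuple ~~ odd (n - i) | i < n].
have isoG : forall x y, G x y = thr bG (f x) (f y).
  move=> x y; rewrite /G /Gr /thr !tnth_mktuple /=.
  rewrite (fv_edge (ltn_ord x) (ltn_ord y)).
  by case: ifP => _; rewrite fv_odd.
exists G, H; split.
- split => //; first exact: symG.
  move=> [f' [fb' fe']].
  have := liso_deg fb' fe' lst; rewrite deg_Gr deg_H /=.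
  have := ltn_ord (f' lst); lia.
- exact: classify.
- split => //.
  + move=> x y; apply: (@connect_trans _ _ lst); apply: connect1;
      rewrite /G /Gr /=; have := ltn_ord x; have := ltn_ord y; lia.
  + move=> h1 hc; have := hc lst (Ordinal hn); case/connectP => -[|z p] /=.
      by move=> _ /(congr1 val) /=; lia.
    by rewrite /H /lcompl /G /Gr /=; have := ltn_ord z; lia.
- split.
  + apply: degseq_iota => // x; rewrite deg_Gr; have := ltn_ord x; lia.
  + apply: degseq_iota => // x; rewrite deg_H; have := ltn_ord x; lia.
- split.
  + by exists bG, f.
  + exists bH, f; split => // x y; rewrite /H /lcompl isoG /thr !tnth_mktuple.
    by case: ifP.
  + move=> b hb; split; first exact: altG.
    have := formula b (altG b hb) 0 hn; rewrite nth0 lastG // => ->.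
    by rewrite subn0 addbT -[in RHS](subnK hn) addn1.
  + move=> b hb; split; first exact: altH.
    have := formula b (altH b hb) 0 hn; rewrite nth0 lastH // => ->.
    by rewrite subn0 addbF -[in RHS](subnK hn) addn1 /= negbK.
  + move=> b1 b2 h1 h2; apply: val_inj => /=.
    apply: (@eq_from_nth _ false); first by rewrite size_map !size_tuple.
    move=> i; rewrite size_tuple => hi.
    rewrite (nth_map false) ?size_tuple //.
    rewrite (formula b2 (altH b2 h2) i hi) (formula b1 (altG b1 h1) i hi).
    by rewrite (lastH b2 h2) (lastG b1 h1); case: (odd _).
Qed.
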